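(* Assume that $p_t\geq 1/2$ for all integers $t\geq 1$. Then $\tilde c_t\leq 1/2\leq c_t$ holds for all integers $t\geq 1$.
   Context: $s(n)$ denotes the binary sum of digits of $n\ge0$. For $t\ge0$, $c_t$ (resp. $\tilde c_t$) is the asymptotic density of $\{n\ge0: s(n+t)\ge s(n)\}$ (resp. $\{n\ge 0: s(n+t)>s(n)\}$). Define numbers $\varphi(k,t)$ for $k\in\mathbb{Z}$ and integers $t\ge1$ by $\varphi(0,1)=1$, $\varphi(k,1)=0$ for $k\neq0$, and for $t\ge1$: $\varphi(k,2t)=\varphi(k,t)$, $\varphi(k,2t+1)=\frac12\varphi(k-1,t)+\frac12\varphi(k+1,t+1)$. Set $p_t=\sum_{k\geq 0}\varphi(k,t)$ (a finite sum, since $\varphi(k,t)=0$ for $k\ge s(t)$). *)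

(* Defs.v *)
From Stdlib Require Import Reals ZArith Arith Lia.
From Coquelicot Require Import Coquelicot.
Open Scope R_scope.

Fixpoint pos_s (p : positive) : nat :=
  match p with xH => 1%nat | xO q => pos_s q | xI q => S (pos_s q) end.
Definition s (n : nat) : nat :=
  match N.of_nat n with N0 => 0%nat | Npos p => pos_s p end.

Fixpoint count_upto (P : nat -> bool) (N : nat) : nat :=
  match N with
  | O => O
  | S m => (count_upto P m + (if P m then 1 else 0))%nat
  end.

(* proportion of m < N with P m; its limit (if any) is the asymptotic density *)
Definition freq (P : nat -> bool) (N : nat) : R := INR (count_upto P N) / INR N.

Definition ge_pred (t : nat) (n : nat) : bool := Nat.leb (s n) (s (n + t)).
Definition gt_pred (t : nat) (n : nat) : bool := Nat.ltb (s n) (s (n + t)).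

(* phi(k,t) via fuel; every recursive call strictly decreases t, so fuel t suffices.
   phi(0,1)=1, phi(k,1)=0 (k<>0), phi(k,2t)=phi(k,t),
   phi(k,2t+1)=1/2 phi(k-1,t) + 1/2 phi(k+1,t+1).  Value at t=0 is irrelevant (0). *)
Fixpoint phi_fuel (fuel : nat) (k : Z) (t : nat) : R :=
  match fuel with
  | O => 0
  | S f =>
      if Nat.leb t 1 then
        (if andb (Nat.eqb t 1) (Z.eqb k 0) then 1 else 0)
      else if Nat.even t then phi_fuel f k (Nat.div2 t)
      else / 2 * phi_fuel f (k - 1)%Z (Nat.div2 t)
           + / 2 * phi_fuel f (k + 1)%Z (S (Nat.div2 t))
  end.

Definition phi (k : Z) (t : nat) : R := phi_fuel t k t.

(* p_t = sum_{k >= 0} phi(k,t); phi(k,t)=0 for k >= s(t) and s(t) <= t,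
   so summing over 0 <= k <= t captures all terms. *)
Definition p (t : nat) : R := sum_f_R0 (fun k => phi (Z.of_nat k) t) t.

(* Main.v *)
Require Import Defs.
From Stdlib Require Import Reals ZArith Arith.
From Coquelicot Require Import Coquelicot.
From Stdlib Require Import Lia Lra.
Open Scope R_scope.
Lemma s_double m : s (2 * m) = s m.
Proof. unfold s. rewrite Nnat.Nat2N.inj_double. destruct (N.of_nat m); reflexivity. Qed.
Lemma s_sdouble m : s (2 * m + 1) = S (s m).
Proof. unfold s. rewrite Nat.add_1_r, Nnat.Nat2N.inj_succ_double. destruct (N.of_nat m); reflexivity. Qed.

Lemma phi_fuel_ext : forall f T k g, (T <= f)%nat -> (T <= g)%nat -> phi_fuel f k T = phi_fuel g k T.
Proof.
  induction f as [|f IH]; intros T k g Hf Hg.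
  - assert (T = 0%nat) by lia. subst. destruct g; reflexivity.
  - destruct g as [|g]. { assert (T = 0%nat) by lia. subst. reflexivity. }
    cbn [phi_fuel].
    destruct (Nat.leb T 1) eqn:E1; [reflexivity|].
    apply Nat.leb_gt in E1.
    destruct (Nat.even T) eqn:E2.
    + apply IH. destruct (Nat.Even_or_Odd T) as [[x Hx]|[x Hx]]; subst.
      * rewrite Nat.div2_double. lia.
      * rewrite Nat.add_1_r, Nat.div2_succ_double. lia.
      * destruct (Nat.Even_or_Odd T) as [[x Hx]|[x Hx]]; subst.
        { rewrite Nat.div2_double. lia. } { rewrite Nat.add_1_r, Nat.div2_succ_double. lia. }
    + destruct (Nat.Even_or_Odd T) as [[x Hx]|[x Hx]]; subst.
      * rewrite Nat.even_even in E2. discriminate.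
      * rewrite Nat.add_1_r, Nat.div2_succ_double in *.
        f_equal; f_equal; apply IH; lia.
Qed.

Lemma phi_fuel_big f k T : (T <= f)%nat -> phi_fuel f k T = phi k T.
Proof. intros; unfold phi; apply phi_fuel_ext; lia. Qed.

Lemma phi_one k : phi k 1 = if Z.eqb k 0 then 1 else 0.
Proof. reflexivity. Qed.

Lemma phi_even k T : (1 <= T)%nat -> phi k (2 * T) = phi k T.
Proof.
  intros HT. unfold phi at 1.
  replace (2 * T)%nat with (S (2 * T - 1)) at 1 by lia. cbn [phi_fuel].
  replace (Nat.leb (2*T) 1) with false by (symmetry; apply Nat.leb_gt; lia).
  rewrite Nat.even_even, Nat.div2_double. apply phi_fuel_big. lia.
Qed.

Lemma phi_odd k T : (1 <= T)%nat ->
  phi k (2 * T + 1) = / 2 * phi (k - 1)%Z T + / 2 * phi (k + 1)%Z (S T).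
Proof.
  intros HT. unfold phi at 1.
  replace (2 * T + 1)%nat with (S (2 * T)) at 1 by lia. cbn [phi_fuel].
  replace (Nat.leb (2*T+1) 1) with false by (symmetry; apply Nat.leb_gt; lia).
  rewrite Nat.even_odd. replace (2*T+1)%nat with (S (2*T)) by lia.
  rewrite Nat.div2_succ_double. rewrite !phi_fuel_big by lia. reflexivity.
Qed.

Lemma phi_nonneg : forall f k T, 0 <= phi_fuel f k T.
Proof.
  induction f; intros; cbn [phi_fuel]; [lra|].
  destruct (Nat.leb T 1). { destruct (andb _ _); lra. }
  destruct (Nat.even T); auto.
  pose proof (IHf (k-1)%Z (Nat.div2 T)). pose proof (IHf (k+1)%Z (S (Nat.div2 T))). lra.
Qed.
Lemma phi_ge0 k T : 0 <= phi k T.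
Proof. apply phi_nonneg. Qed.

Definition Hs (a : Z) (T N : nat) : R := sum_f_R0 (fun i => phi (Z.of_nat i - a) T) N.

Lemma Hs_even a T N : (1 <= T)%nat -> Hs a (2*T) N = Hs a T N.
Proof. intros; unfold Hs; apply sum_eq; intros; apply phi_even; auto. Qed.

Lemma Hs_odd a T N : (1 <= T)%nat ->
  Hs a (2*T+1) N = / 2 * Hs (a+1) T N + / 2 * Hs (a-1) (S T) N.
Proof.
  intros; unfold Hs. rewrite !scal_sum, <- sum_plus. apply sum_eq; intros.
  rewrite phi_odd by auto.
  replace (Z.of_nat i - a - 1)%Z with (Z.of_nat i - (a+1))%Z by lia.
  replace (Z.of_nat i - a + 1)%Z with (Z.of_nat i - (a-1))%Z by lia. lra.
Qed.

Lemma ind_sum a N : sum_f_R0 (fun i => if Z.eqb (Z.of_nat i) a then 1 else 0) N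
   = if (Z.leb 0 a && Z.leb a (Z.of_nat N))%bool then 1 else 0.
Proof.
  induction N.
  - change (sum_f_R0 ?f 0) with (f 0%nat). cbv beta. change (Z.of_nat 0) with 0%Z.
    destruct (Z.eqb_spec 0 a); destruct (Z.leb_spec 0 a); destruct (Z.leb_spec a 0); simpl; first [lra|lia].
  - rewrite tech5, IHN.
    destruct (Z.eqb_spec (Z.of_nat (S N)) a); destruct (Z.leb_spec 0 a);
    destruct (Z.leb_spec a (Z.of_nat N)); destruct (Z.leb_spec a (Z.of_nat (S N))); simpl; first [lra|lia].
Qed.

Lemma Hs_one a N : Hs a 1 N <= if Z.leb 0 a then 1 else 0.
Proof.
  unfold Hs. rewrite (sum_eq _ (fun i => if Z.eqb (Z.of_nat i) a then 1 else 0)).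
  - rewrite ind_sum. destruct (Z.leb 0 a), (Z.leb a _); simpl; lra.
  - intros. rewrite phi_one. destruct (Z.eqb_spec (Z.of_nat i - a) 0); destruct (Z.eqb_spec (Z.of_nat i) a); first [lia|reflexivity].
Qed.

Lemma Hs_nonneg a T N : 0 <= Hs a T N.
Proof. unfold Hs. induction N. - apply phi_ge0. - rewrite tech5. pose proof (phi_ge0 (Z.of_nat (S N) - a) T); lra. Qed.

Lemma Hs_two a N : Hs a 2 N <= if Z.leb 0 a then 1 else 0.
Proof. rewrite (Hs_even a 1) by lia. apply Hs_one. Qed.

Lemma Hs_three a N : Hs a 3 N <= if Z.leb (-1) a then 1 else 0.
Proof.
  rewrite (Hs_odd a 1) by lia. pose proof (Hs_one (a+1) N). pose proof (Hs_two (a-1) N).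
  destruct (Z.leb_spec 0 (a+1)); destruct (Z.leb_spec 0 (a-1)); destruct (Z.leb_spec (-1) a); try lia; lra.
Qed.

Lemma p_Hs T : p T = Hs 0 T T.
Proof. unfold p, Hs. apply sum_eq; intros. rewrite Z.sub_0_r. reflexivity. Qed.

Lemma count_ext P Q n : (forall i, (i < n)%nat -> P i = Q i) -> count_upto P n = count_upto Q n.
Proof. induction n; intros H; simpl; auto. rewrite IHn by (intros; apply H; lia). rewrite H by lia. auto. Qed.

Lemma count_add P n m : count_upto P (n + m) = (count_upto P n + count_upto (fun i => P (n + i)) m)%nat.
Proof. induction m. - rewrite Nat.add_0_r; simpl; lia. - rewrite Nat.add_succ_r. simpl. rewrite IHm. lia. Qed.

Lemma count_double P n : count_upto P (2 * n) =
  (count_upto (fun i => P (2 * i)) n + count_upto (fun i => P (2 * i + 1)) n)%nat.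
Proof.
  induction n; [reflexivity|].
  replace (2 * S n)%nat with (S (S (2 * n))) by lia. cbn [count_upto]. rewrite IHn.
  replace (S (2*n)) with (2*n+1)%nat by lia. lia.
Qed.

Lemma count_compl P n : (count_upto P n + count_upto (fun i => negb (P i)) n)%nat = n.
Proof. induction n; simpl; auto. destruct (P n); simpl; lia. Qed.

Definition P_ge (a : Z) (t m : nat) : bool := Z.leb (Z.of_nat (s m)) (Z.of_nat (s (m + t)) + a).
Definition P_le (L : nat) (a : Z) (t m : nat) : bool :=
  Z.leb (Z.of_nat (s (2^L + m + t))) (Z.of_nat (s (2^L + m)) + a).

Ltac zleb := rewrite ?Nat2Z.inj_succ;
  match goal with |- Z.leb ?x ?y = Z.leb ?z ?w =>
    destruct (Z.leb_spec x y), (Z.leb_spec z w); first [reflexivity | lia] end.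

Lemma pow2_pos L : (1 <= 2 ^ L)%nat.
Proof. induction L; simpl; lia. Qed.

Lemma GE : forall L t a N, (t <= 2^L)%nat ->
  INR (count_upto (P_ge a t) (2^L)) >= 2^L * Hs a (2 * 2^L + t) N.
Proof.
  induction L; intros t a N Ht.
  - simpl in Ht |- *. assert (t = 0 \/ t = 1)%nat as [-> | ->] by lia.
    + pose proof (Hs_two a N). assert (E : P_ge a 0 0 = Z.leb 0 (0 + a)) by reflexivity. rewrite E.
      destruct (Z.leb_spec 0 a); destruct (Z.leb_spec 0 (0 + a)); simpl; try lia; lra.
    + pose proof (Hs_three a N). assert (E : P_ge a 1 0 = Z.leb 0 (1 + a)) by reflexivity. rewrite E.
      destruct (Z.leb_spec (-1) a); destruct (Z.leb_spec 0 (1 + a)); simpl; try lia; lra.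
  - rewrite Nat.pow_succ_r' in *. rewrite count_double, plus_INR.
    change (2 ^ S L) with (2 * 2 ^ L). pose proof (pow2_pos L).
    destruct (Nat.Even_or_Odd t) as [[u ->]|[u ->]].
    + rewrite (count_ext _ (P_ge a u)), (count_ext (fun i => P_ge a (2*u) (2*i+1)) (P_ge a u)).
      * replace (2 * (2 * 2 ^ L) + 2 * u)%nat with (2 * (2 * 2^L + u))%nat by lia.
        rewrite Hs_even by lia. pose proof (IHL u a N ltac:(lia)). lra.
      * intros i _. unfold P_ge. replace (2*i+1 + 2*u)%nat with (2*(i+u)+1)%nat by lia.
        rewrite !s_sdouble. zleb.
      * intros i _. unfold P_ge. replace (2*i + 2*u)%nat with (2*(i+u))%nat by lia.
        rewrite !s_double. reflexivity.
    + rewrite (count_ext _ (P_ge (a+1) u)), (count_ext (fun i => P_ge a (2*u+1) (2*i+1)) (P_ge (a-1) (u+1))).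
      * replace (2 * (2 * 2 ^ L) + (2 * u + 1))%nat with (2 * (2 * 2^L + u) + 1)%nat by lia.
        rewrite Hs_odd by lia. replace (S (2 * 2 ^ L + u)) with (2 * 2^L + (u+1))%nat by lia.
        pose proof (IHL u (a+1)%Z N ltac:(lia)). pose proof (IHL (u+1)%nat (a-1)%Z N ltac:(lia)). lra.
      * intros i _. unfold P_ge. replace (2*i+1 + (2*u+1))%nat with (2*(i+(u+1)))%nat by lia.
        rewrite s_double, s_sdouble. zleb.
      * intros i _. unfold P_ge. replace (2*i + (2*u+1))%nat with (2*(i+u)+1)%nat by lia.
        rewrite s_double, s_sdouble. zleb.
Qed.

Lemma LE : forall L t a N, (t <= 2^L)%nat ->
  INR (count_upto (P_le L a t) (2^L)) >= 2^L * Hs a (2 * 2^L - t) N.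
Proof.
  induction L; intros t a N Ht.
  - simpl in Ht |- *. assert (t = 0 \/ t = 1)%nat as [-> | ->] by lia.
    + pose proof (Hs_two a N). assert (E : P_le 0 a 0 0 = Z.leb 1 (1 + a)) by reflexivity. rewrite E.
      destruct (Z.leb_spec 0 a); destruct (Z.leb_spec 1 (1 + a)); simpl; try lia; lra.
    + pose proof (Hs_one a N). assert (E : P_le 0 a 1 0 = Z.leb 1 (1 + a)) by reflexivity. rewrite E.
      destruct (Z.leb_spec 0 a); destruct (Z.leb_spec 1 (1 + a)); simpl; try lia; lra.
  - rewrite Nat.pow_succ_r' in *. rewrite count_double, plus_INR.
    change (2 ^ S L) with (2 * 2 ^ L). pose proof (pow2_pos L).
    destruct (Nat.Even_or_Odd t) as [[u ->]|[u ->]].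
    + rewrite (count_ext _ (P_le L a u)), (count_ext (fun i => P_le (S L) a (2*u) (2*i+1)) (P_le L a u)).
      * replace (2 * (2 * 2 ^ L) - 2 * u)%nat with (2 * (2 * 2^L - u))%nat by lia.
        rewrite Hs_even by lia. pose proof (IHL u a N ltac:(lia)). lra.
      * intros i _. unfold P_le. rewrite Nat.pow_succ_r'.
        replace (2 * 2^L + (2*i+1) + 2*u)%nat with (2*(2^L+i+u)+1)%nat by lia.
        replace (2 * 2^L + (2*i+1))%nat with (2*(2^L+i)+1)%nat by lia.
        rewrite !s_sdouble. zleb.
      * intros i _. unfold P_le. rewrite Nat.pow_succ_r'.
        replace (2 * 2^L + 2*i + 2*u)%nat with (2*(2^L+i+u))%nat by lia.
        replace (2 * 2^L + 2*i)%nat with (2*(2^L+i))%nat by lia.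
        rewrite !s_double. reflexivity.
    + rewrite (count_ext _ (P_le L (a-1) u)), (count_ext (fun i => P_le (S L) a (2*u+1) (2*i+1)) (P_le L (a+1) (u+1))).
      * replace (2 * (2 * 2 ^ L) - (2 * u + 1))%nat with (2 * (2 * 2^L - (u+1)) + 1)%nat by lia.
        rewrite Hs_odd by lia. replace (S (2 * 2 ^ L - (u+1))) with (2 * 2^L - u)%nat by lia.
        pose proof (IHL u (a-1)%Z N ltac:(lia)). pose proof (IHL (u+1)%nat (a+1)%Z N ltac:(lia)). lra.
      * intros i _. unfold P_le. rewrite Nat.pow_succ_r'.
        replace (2 * 2^L + (2*i+1) + (2*u+1))%nat with (2*(2^L+i+(u+1)))%nat by lia.
        replace (2 * 2^L + (2*i+1))%nat with (2*(2^L+i)+1)%nat by lia.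
        rewrite s_double, s_sdouble. zleb.
      * intros i _. unfold P_le. rewrite Nat.pow_succ_r'.
        replace (2 * 2^L + 2*i + (2*u+1))%nat with (2*(2^L+i+u)+1)%nat by lia.
        replace (2 * 2^L + 2*i)%nat with (2*(2^L+i))%nat by lia.
        rewrite s_double, s_sdouble. zleb.
Qed.

Lemma INR_pow2 L : INR (2 ^ L) = 2 ^ L.
Proof. rewrite pow_INR. replace (INR 2) with 2 by (simpl; lra). reflexivity. Qed.

Lemma pow2_ge_t t : (t <= 2 ^ t)%nat.
Proof. pose proof (Nat.pow_gt_lin_r 2 t ltac:(lia)). lia. Qed.

Lemma ge_count (hp : forall t : nat, (1 <= t)%nat -> p t >= 1 / 2) t L :
  (t <= 2^L)%nat -> INR (count_upto (ge_pred t) (2^L)) >= 2^L / 2.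
Proof.
  intros Ht. rewrite (count_ext _ (P_ge 0 t)).
  - pose proof (GE L t 0 (2 * 2^L + t) Ht). rewrite <- p_Hs in H.
    pose proof (hp (2 * 2^L + t)%nat ltac:(pose proof (pow2_pos L); lia)).
    pose proof (pow_lt 2 L ltac:(lra)). nra.
  - intros i _. unfold ge_pred, P_ge. rewrite Z.add_0_r.
    destruct (Nat.leb_spec (s i) (s (i+t))), (Z.leb_spec (Z.of_nat (s i)) (Z.of_nat (s (i+t)))); first [reflexivity|lia].
Qed.

Lemma gt_count (hp : forall t : nat, (1 <= t)%nat -> p t >= 1 / 2) t L :
  (t <= 2^L)%nat -> INR (count_upto (gt_pred t) (2 * 2^L)) <= INR (count_upto (gt_pred t) (2^L)) + 2^L / 2.
Proof.
  intros Ht. replace (2 * 2^L)%nat with (2^L + 2^L)%nat by lia. rewrite count_add, plus_INR.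
  pose proof (count_compl (fun i => gt_pred t (2^L + i)) (2^L)) as C.
  rewrite (count_ext (fun i => negb (gt_pred t (2^L + i))) (P_le L 0 t)) in C.
  - apply (f_equal INR) in C. rewrite plus_INR, INR_pow2 in C.
    pose proof (LE L t 0 (2 * 2^L - t) Ht). rewrite <- p_Hs in H.
    pose proof (pow2_pos L).
    pose proof (hp (2 * 2^L - t)%nat ltac:(lia)).
    pose proof (pow_lt 2 L ltac:(lra)). nra.
  - intros i _. unfold gt_pred, P_le. rewrite Z.add_0_r.
    replace (2^L + i + t)%nat with (2^L + i + t)%nat by lia.
    destruct (Nat.ltb_spec (s (2^L+i)) (s (2^L+i+t))),
      (Z.leb_spec (Z.of_nat (s (2^L+i+t))) (Z.of_nat (s (2^L+i)))); simpl; first [reflexivity|lia].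
Qed.

Theorem lemma3p2 :
  (forall t : nat, (1 <= t)%nat -> p t >= 1 / 2) ->
  forall t : nat, (1 <= t)%nat ->
    (forall ct : R, is_lim_seq (freq (gt_pred t)) ct -> ct <= 1 / 2) /\
    (forall c : R, is_lim_seq (freq (ge_pred t)) c -> 1 / 2 <= c).
Proof.
  intros hp t Ht. split.
  - intros ct Hl.
    assert (Hu : is_lim_seq (fun n => freq (gt_pred t) (2 ^ (n + t))) ct).
    { apply (is_lim_seq_subseq (freq (gt_pred t)) ct (fun n => 2 ^ (n + t))%nat); auto.
      apply eventually_subseq. intros n. simpl. pose proof (pow2_pos (n+t)). lia. }
    assert (Hw : is_lim_seq (fun n => freq (gt_pred t) (2 ^ (S n + t))) ct).
    { apply (is_lim_seq_subseq (freq (gt_pred t)) ct (fun n => 2 ^ (S n + t))%nat); auto.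
      apply eventually_subseq. intros n. simpl. pose proof (pow2_pos (n+t)). lia. }
    assert (Hv : is_lim_seq (fun n => / 2 * freq (gt_pred t) (2 ^ (n + t)) + / 4) (/2 * ct + /4)).
    { apply is_lim_seq_plus'. apply (is_lim_seq_scal_l _ (/2) ct Hu). apply is_lim_seq_const. }
    assert (Hpt : forall n, freq (gt_pred t) (2^(S n + t)) <= /2 * freq (gt_pred t) (2^(n+t)) + /4).
    { intros n. unfold freq. change (S n + t)%nat with (S (n + t)). rewrite Nat.pow_succ_r'.
      pose proof (gt_count hp t (n + t) ltac:(pose proof (pow2_ge_t t); pose proof (Nat.pow_le_mono_r 2 t (n+t)); lia)).
      rewrite mult_INR, INR_pow2. replace (INR 2) with 2 by (simpl; lra).
      pose proof (pow_lt 2 (n+t) ltac:(lra)). set (M := 2 ^ (n+t)) in *.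
      set (c2 := INR (count_upto (gt_pred t) (2 * 2 ^ (n + t)))) in *.
      set (c1 := INR (count_upto (gt_pred t) (2 ^ (n + t)))) in *.
      apply Rmult_le_reg_r with (2 * M); [lra|].
      unfold Rdiv. rewrite Rmult_assoc, Rinv_l by lra.
      replace ((/ 2 * (c1 * / M) + / 4) * (2 * M)) with (c1 * (/ M * M) + M / 2) by (field; lra).
      rewrite Rinv_l by lra. lra. }
    pose proof (is_lim_seq_le _ _ _ _ Hpt Hw Hv) as Hle. simpl in Hle. lra.
  - intros c Hl.
    assert (Hu : is_lim_seq (fun n => freq (ge_pred t) (2 ^ (n + t))) c).
    { apply (is_lim_seq_subseq (freq (ge_pred t)) c (fun n => 2 ^ (n + t))%nat); auto.
      apply eventually_subseq. intros n. simpl. pose proof (pow2_pos (n+t)). lia. }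
    assert (Hpt : forall n, 1/2 <= freq (ge_pred t) (2 ^ (n + t))).
    { intros n. unfold freq. rewrite INR_pow2.
      pose proof (ge_count hp t (n + t) ltac:(pose proof (pow2_ge_t t); pose proof (Nat.pow_le_mono_r 2 t (n+t)); lia)).
      pose proof (pow_lt 2 (n+t) ltac:(lra)).
      apply Rmult_le_reg_r with (2 ^ (n+t)); auto.
      replace (INR (count_upto (ge_pred t) (2 ^ (n + t))) / 2 ^ (n + t) * 2 ^ (n + t)) with (INR (count_upto (ge_pred t) (2 ^ (n + t)))) by (field; lra). lra. }
    pose proof (is_lim_seq_le _ _ _ _ Hpt (is_lim_seq_const (1/2)) Hu) as Hle. simpl in Hle. lra.
Qed.
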